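(* For every integer $n\ge 2$, the set of lower accumulation points for $n$ runners contains $\mathcal{S}(n-1)$.
   Context: For a real number $x$, $\Vert x\Vert$ denotes the distance from $x$ to the nearest integer. For positive integers $v_1,\ldots,v_n$, $\mathrm{ML}(v_1,\ldots,v_n)=\max_{t\in\mathbb{R}}\min_{1\le i\le n}\Vert t v_i\Vert$. Let $\mathcal{S}(n)=\{\mathrm{ML}(v_1,\ldots,v_n): v_1,\ldots,v_n \text{ positive integers}\}$. A real number $A$ is a lower accumulation point for $n$ runners if $\mathcal{S}(n)$ contains a sequence of elements strictly less than $A$ converging to $A$. *)

(* Defs.v *)
From Stdlib Require Import Reals Lra Lia List.
Import ListNotations.
Open Scope R_scope.

(* floor of a real: [up x] is the unique integer with x < up x <= x + 1 *)
Definition rfloor (x : R) : Z := (up x - 1)%Z.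

Definition dist_int (x : R) : R :=
  Rmin (x - IZR (rfloor x)) (IZR (rfloor x) + 1 - x).

(* minimum of a nonempty list of reals (value on [] is irrelevant) *)
Definition min_list (l : list R) : R :=
  match l with
  | [] => 0
  | x :: r => fold_right Rmin x r
  end.

Definition min_dist (v : list nat) (t : R) : R :=
  min_list (map (fun vi => dist_int (t * INR vi)) v).

Definition is_ML (v : list nat) (m : R) : Prop :=
  (exists t : R, min_dist v t = m) /\ (forall t : R, min_dist v t <= m).

Definition S_set (n : nat) (m : R) : Prop :=
  exists v : list nat, length v = n /\ Forall (fun vi => (0 < vi)%nat) v /\ is_ML v m.

Definition lower_acc_point (n : nat) (A : R) : Prop :=
  exists s : nat -> R,
    (forall k, S_set n (s k)) /\ (forall k, s k < A) /\ Un_cv s A.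

(* Main.v *)
Require Import Defs.
From Stdlib Require Import Reals Lra Lia List ZArith ClassicalEpsilon Classical.
Import ListNotations.
Open Scope R_scope.

Lemma rfloor_spec x : IZR (rfloor x) <= x < IZR (rfloor x) + 1.
Proof. unfold rfloor. destruct (archimed x) as [H1 H2]. rewrite minus_IZR.
  replace (IZR 1) with 1 by reflexivity. lra. Qed.

Lemma dist_le x k : dist_int x <= Rabs (x - IZR k).
Proof. pose proof (rfloor_spec x). unfold dist_int. set (f := rfloor x) in *.
  destruct (Z_le_dec k f).
  - apply IZR_le in l. apply Rle_trans with (x - IZR f). apply Rmin_l.
    rewrite Rabs_right; lra.
  - assert (IZR f + 1 <= IZR k) by (replace 1 with (IZR 1) by reflexivity; rewrite <- plus_IZR; apply IZR_le; lia).
    eapply Rle_trans. apply Rmin_r. rewrite Rabs_left1; lra. Qed.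

Lemma dist_att x : exists k, dist_int x = Rabs (x - IZR k).
Proof. pose proof (rfloor_spec x). unfold dist_int. set (f := rfloor x) in *.
  destruct (Rle_dec (x - IZR f) (IZR f + 1 - x)).
  - exists f. rewrite Rmin_left by lra. rewrite Rabs_right; lra.
  - exists (f+1)%Z. rewrite Rmin_right by lra. rewrite plus_IZR.
    replace (IZR 1) with 1 by reflexivity. rewrite Rabs_left1; lra. Qed.

Lemma dist_nonneg x : 0 <= dist_int x.
Proof. destruct (dist_att x) as [k ->]. apply Rabs_pos. Qed.

Lemma dist_half x : dist_int x <= 1/2.
Proof. pose proof (rfloor_spec x). unfold dist_int. set (f := rfloor x) in *.
  destruct (Rle_dec (x - IZR f) (IZR f + 1 - x)).
  - eapply Rle_trans. apply Rmin_l. lra.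
  - eapply Rle_trans. apply Rmin_r. lra. Qed.

Lemma dist_lip x y : dist_int x <= dist_int y + Rabs (x - y).
Proof. destruct (dist_att y) as [k Hk]. eapply Rle_trans. apply (dist_le x k).
  rewrite Hk. replace (x - IZR k) with ((x-y)+(y-IZR k)) by ring.
  eapply Rle_trans. apply Rabs_triang. lra. Qed.

Lemma dist_shift k y : Rabs y <= 1/2 -> dist_int (IZR k + y) = Rabs y.
Proof. intros Hy. apply Rle_antisym.
  - pose proof (dist_le (IZR k + y) k) as H.
    replace (IZR k + y - IZR k) with y in H by ring. exact H.
  - destruct (dist_att (IZR k + y)) as [k0 H0]. rewrite H0.
    destruct (Z.eq_dec k0 k).
    + subst. replace (IZR k + y - IZR k) with y by ring. lra.
    + assert (1 <= Rabs (IZR k - IZR k0)).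
      { rewrite <- minus_IZR, <- abs_IZR. apply IZR_le. lia. }
      pose proof (Rabs_triang_inv (IZR k - IZR k0) (-y)).
      rewrite Rabs_Ropp in H1.
      replace (IZR k - IZR k0 - - y) with (IZR k + y - IZR k0) in H1 by ring. lra.
Qed.

Lemma dist_per x k : dist_int (x + IZR k) = dist_int x.
Proof. apply Rle_antisym.
  - destruct (dist_att x) as [k0 H0]. rewrite H0.
    pose proof (dist_le (x + IZR k) (k0 + k)). rewrite plus_IZR in H.
    replace (x + IZR k - (IZR k0 + IZR k)) with (x - IZR k0) in H by ring. exact H.
  - destruct (dist_att (x + IZR k)) as [k0 H0]. rewrite H0.
    pose proof (dist_le x (k0 - k)). rewrite minus_IZR in H.
    replace (x - (IZR k0 - IZR k)) with (x + IZR k - IZR k0) in H by ring. exact H.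
Qed.

Lemma dist_int0 k : dist_int (IZR k) = 0.
Proof. pose proof (dist_le (IZR k) k). replace (IZR k - IZR k) with 0 in H by ring.
  rewrite Rabs_R0 in H. pose proof (dist_nonneg (IZR k)). lra. Qed.
Lemma fold_min_in x r : In (fold_right Rmin x r) (x::r).
Proof. induction r as [|a r IH]; simpl. left; auto.
  destruct (Rle_dec a (fold_right Rmin x r)).
  - rewrite Rmin_left by lra. right; left; auto.
  - rewrite Rmin_right by lra. destruct IH as [H|H]; [left; auto | right; right; auto]. Qed.

Lemma fold_min_le x r y : In y (x::r) -> fold_right Rmin x r <= y.
Proof. induction r as [|a r IH]; simpl.
  - intros [H|H]; [subst; lra | contradiction].
  - intros [H|[H|H]].
    + eapply Rle_trans. apply Rmin_r. apply IH. left; auto.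
    + subst. apply Rmin_l.
    + eapply Rle_trans. apply Rmin_r. apply IH. right; auto. Qed.

Lemma md_att v t : v <> [] -> exists vi, In vi v /\ min_dist v t = dist_int (t * INR vi).
Proof. intros Hv. unfold min_dist.
  destruct v as [|a r]; [congruence|]. simpl.
  pose proof (fold_min_in (dist_int (t * INR a)) (map (fun vi => dist_int (t * INR vi)) r)) as H.
  change (In (fold_right Rmin (dist_int (t * INR a)) (map (fun vi => dist_int (t * INR vi)) r))
     (map (fun vi => dist_int (t * INR vi)) (a::r))) in H.
  apply in_map_iff in H. destruct H as [x [Hx Hin]]. exists x. split; auto. Qed.

Lemma md_le v t vi : In vi v -> min_dist v t <= dist_int (t * INR vi).
Proof. intros Hin. unfold min_dist.
  destruct v as [|a r]; [contradiction|]. simpl.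
  apply fold_min_le.
  change (In (dist_int (t * INR vi)) (map (fun vi => dist_int (t * INR vi)) (a::r))).
  apply in_map_iff. exists vi; auto. Qed.

Lemma md_per v t z : min_dist v (t + IZR z) = min_dist v t.
Proof. unfold min_dist. f_equal. apply map_ext. intros a.
  replace ((t + IZR z) * INR a) with (t * INR a + IZR (z * Z.of_nat a)).
  apply dist_per. rewrite mult_IZR, <- INR_IZR_INZ. ring. Qed.

Lemma in_sum x l : In x l -> (x <= list_sum l)%nat.
Proof. induction l; simpl. contradiction. intros [H|H]. subst; lia. apply IHl in H; lia. Qed.

Lemma bound_ex (v : list nat) : exists V, 1 <= V /\ forall vi, In vi v -> INR vi <= V.
Proof. exists (INR (list_sum v) + 1). split. pose proof (pos_INR (list_sum v)); lra.
  intros vi H. apply in_sum in H. apply le_INR in H. lra. Qed.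

Lemma md_lip v t s V : v <> [] -> (forall vi, In vi v -> INR vi <= V) ->
  min_dist v t <= min_dist v s + V * Rabs (t - s).
Proof. intros Hv HV. destruct (md_att v s Hv) as [vi [Hin Hs]].
  eapply Rle_trans. apply (md_le v t vi Hin). rewrite Hs.
  eapply Rle_trans. apply dist_lip.
  replace (t * INR vi - s * INR vi) with ((t - s) * INR vi) by ring.
  rewrite Rabs_mult, (Rabs_right (INR vi)) by (apply Rle_ge, pos_INR).
  pose proof (HV vi Hin). pose proof (Rabs_pos (t - s)).
  assert (Rabs (t-s) * INR vi <= V * Rabs (t-s)) by nra. lra. Qed.

Lemma md_cont v c : v <> [] -> continuity_pt (min_dist v) c.
Proof. intros Hv. destruct (bound_ex v) as [V [HV1 HV]].
  unfold continuity_pt, continue_in, limit1_in, limit_in. intros eps Heps.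
  exists (eps / (V + 1)). split. apply Rdiv_lt_0_compat; lra.
  intros x [_ Hx]. simpl in *. unfold R_dist in *.
  pose proof (md_lip v x c V Hv HV). pose proof (md_lip v c x V Hv HV).
  rewrite Rabs_minus_sym in H0.
  assert (V * Rabs (x - c) < eps).
  { assert (Rabs (x - c) * (V+1) < eps).
    { apply Rmult_lt_compat_r with (r := V+1) in Hx; [|lra].
      field_simplify in Hx; lra. }
    pose proof (Rabs_pos (x-c)). nra. }
  apply Rabs_def1; lra. Qed.

Lemma exists_ML u : u <> [] -> exists m, is_ML u m.
Proof. intros Hu.
  destruct (continuity_ab_maj (min_dist u) 0 1 ltac:(lra) (fun c _ => md_cont u c Hu))
    as [Mx [HM _]].
  exists (min_dist u Mx). split. exists Mx; auto.
  intros t. pose proof (rfloor_spec t).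
  replace t with ((t - IZR (rfloor t)) + IZR (rfloor t)) by ring.
  rewrite md_per. apply HM. lra. Qed.
Lemma ML_pos v A : v <> [] -> (forall vi, In vi v -> (0 < vi)%nat) -> is_ML v A -> 0 < A.
Proof. intros Hv Hpos [_ HA]. destruct (bound_ex v) as [V [HV1 HV]].
  set (t := 1 / (2 * V)).
  destruct (md_att v t Hv) as [vi [Hin Hm]].
  pose proof (HA t) as H. rewrite Hm in H.
  assert (1 <= INR vi) by (apply (le_INR 1); apply Hpos in Hin; lia).
  pose proof (HV vi Hin).
  assert (0 < t * INR vi /\ t * INR vi <= 1/2).
  { unfold t. split. apply Rmult_lt_0_compat; [apply Rdiv_lt_0_compat|]; lra.
    apply Rmult_le_reg_l with (r := 2 * V). lra.
    field_simplify; lra. }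
  replace (t * INR vi) with (IZR 0 + t * INR vi) in H by (simpl; ring).
  rewrite dist_shift in H by (rewrite Rabs_right; lra).
  rewrite Rabs_right in H; lra. Qed.

Lemma comb (Q : nat -> R -> Prop) (l : list nat) :
  (forall i, In i l -> exists d, 0 < d /\ forall e, 0 < e <= d -> Q i e) ->
  exists d, 0 < d /\ forall i, In i l -> forall e, 0 < e <= d -> Q i e.
Proof. induction l as [|a l IH]; intros H.
  - exists 1. split. lra. intros i [].
  - destruct (H a (or_introl eq_refl)) as [d0 [Hd0 H0]].
    destruct IH as [d1 [Hd1 H1]]. { intros i Hi. apply H. right; auto. }
    exists (Rmin d0 d1). split. apply Rmin_glb_lt; auto.
    intros i [<-|Hi] e He.
    + apply H0. pose proof (Rmin_l d0 d1). lra.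
    + apply H1; auto. pose proof (Rmin_r d0 d1). lra. Qed.

Lemma key v A t : v <> [] -> (forall vi, In vi v -> (0 < vi)%nat) -> is_ML v A ->
  min_dist v t = A ->
  exists i j z, In i v /\ In j v /\ t * (INR i + INR j) = IZR z.
Proof. intros Hv Hpos HML Ht. apply NNPP. intros Hn.
  assert (Hn' : forall i j z, In i v -> In j v -> t * (INR i + INR j) <> IZR z).
  { intros i j z Hi Hj He. apply Hn. exists i, j, z. auto. }
  clear Hn.
  pose proof (ML_pos v A Hv Hpos HML) as HA0.
  assert (Hact : forall i, In i v -> dist_int (t * INR i) = A ->
     exists k, t * INR i - IZR k = A \/ t * INR i - IZR k = - A).
  { intros i Hi Hd. destruct (dist_att (t * INR i)) as [k Hk]. exists k.
    rewrite Hd in Hk. destruct (Rcase_abs (t * INR i - IZR k)).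
    - rewrite Rabs_left in Hk by lra. right; lra.
    - rewrite Rabs_right in Hk by lra. left; lra. }
  assert (Hnopm : forall i j k k', In i v -> In j v ->
     t * INR i - IZR k = A -> t * INR j - IZR k' = - A -> False).
  { intros i j k k' Hi Hj H1 H2. apply (Hn' i j (k + k')%Z Hi Hj).
    rewrite plus_IZR. lra. }
  assert (HA1 : A < 1/2).
  { destruct (md_att v t Hv) as [vi [Hin Hm]].
    pose proof (dist_half (t * INR vi)). rewrite <- Hm, Ht in H.
    destruct (Req_dec A (1/2)) as [He|]; [|lra].
    destruct (Hact vi Hin ltac:(congruence)) as [k [Hk|Hk]].
    - exfalso. apply (Hn' vi vi (2*k+1)%Z Hin Hin). rewrite plus_IZR, mult_IZR.
      simpl. lra.
    - exfalso. apply (Hn' vi vi (2*k-1)%Z Hin Hin). rewrite minus_IZR, mult_IZR.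
      simpl. lra. }
  assert (Hsig : exists s, (s = 1 \/ s = -1) /\ forall i, In i v ->
     dist_int (t * INR i) = A -> exists k, s * (t * INR i - IZR k) = A).
  { destruct (classic (exists i k, In i v /\ t * INR i - IZR k = A)) as [[i0 [k0 [Hi0 Hk0]]]|Hno].
    - exists 1. split. left; auto. intros i Hi Hd.
      destruct (Hact i Hi Hd) as [k [Hk|Hk]].
      + exists k. lra.
      + exfalso. apply (Hnopm i0 i k0 k); auto.
    - exists (-1). split. right; auto. intros i Hi Hd.
      destruct (Hact i Hi Hd) as [k [Hk|Hk]].
      + exfalso. apply Hno. exists i, k. auto.
      + exists k. lra. }
  destruct Hsig as [s [Hs Hsig]].
  destruct (comb (fun i e => A < dist_int ((t + s * e) * INR i)) v) as [d [Hd Hall]].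
  { intros i Hi. pose proof (Hpos i Hi) as Hp.
    assert (Hip : 1 <= INR i) by (apply (le_INR 1); lia).
    pose proof (md_le v t i Hi) as Hle. rewrite Ht in Hle.
    destruct (Req_dec (dist_int (t * INR i)) A) as [Heq|Hne].
    - destruct (Hsig i Hi Heq) as [k Hk].
      exists ((1/2 - A) / INR i). split. apply Rdiv_lt_0_compat; lra.
      intros e [He1 He2].
      assert (e * INR i <= 1/2 - A).
      { apply Rmult_le_compat_r with (r := INR i) in He2; [|lra].
        field_simplify in He2; lra. }
      assert (0 < e * INR i) by nra.
      replace ((t + s * e) * INR i) with (IZR k + s * (A + e * INR i)).
      + rewrite dist_shift; destruct Hs as [-> | ->];
          try rewrite Rabs_right by lra; try rewrite Rabs_left by lra;
          try (rewrite Rabs_left by lra); try lra.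
        all: replace (-1 * (A + e * INR i)) with (- (A + e * INR i)) by ring;
             rewrite Rabs_Ropp, Rabs_right; lra.
      + destruct Hs as [-> | ->]; nra.
    - assert (Hgt : A < dist_int (t * INR i)) by lra.
      exists ((dist_int (t * INR i) - A) / (2 * INR i)). split.
      apply Rdiv_lt_0_compat; lra.
      intros e [He1 He2].
      assert (e * INR i <= (dist_int (t * INR i) - A) / 2).
      { apply Rmult_le_compat_r with (r := INR i) in He2; [|lra].
        field_simplify in He2; lra. }
      pose proof (dist_lip (t * INR i) ((t + s * e) * INR i)).
      replace (t * INR i - (t + s * e) * INR i) with (- (s * e * INR i)) in H0 by ring.
      rewrite Rabs_Ropp in H0.
      assert (Rabs (s * e * INR i) = e * INR i).
      { destruct Hs as [-> | ->]. rewrite Rabs_right; nra.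
        rewrite Rabs_left; nra. }
      lra. }
  destruct (md_att v (t + s * d) Hv) as [vi [Hin Hm]].
  pose proof (Hall vi Hin d (conj Hd (Rle_refl d))).
  destruct HML as [_ HM]. pose proof (HM (t + s * d)). lra. Qed.
Definition prodl (l : list nat) : nat := fold_right Nat.mul 1%nat l.
Definition PP (v : list nat) : nat := prodl (map (fun i => prodl (map (fun j => (i + j)%nat) v)) v).

Lemma divide_prodl x l : In x l -> Nat.divide x (prodl l).
Proof. induction l as [|a l IH]; simpl. contradiction.
  intros [<-|H]. exists (prodl l). ring. apply Nat.divide_mul_r. auto. Qed.

Lemma prodl_pos l : (forall x, In x l -> 0 < x)%nat -> (0 < prodl l)%nat.
Proof. induction l as [|a l IH]; simpl; intros H. lia.
  apply Nat.mul_pos_pos. apply H; auto. apply IH; auto. Qed.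

Lemma PP_div i j v : In i v -> In j v -> Nat.divide (i + j) (PP v).
Proof. intros Hi Hj. apply Nat.divide_trans with (prodl (map (fun j => (i + j)%nat) v)).
  apply divide_prodl. apply in_map_iff. exists j; auto.
  apply divide_prodl. apply in_map_iff. exists i; auto. Qed.

Lemma PP_pos v : (forall vi, In vi v -> 0 < vi)%nat -> (0 < PP v)%nat.
Proof. intros H. apply prodl_pos. intros x Hx. apply in_map_iff in Hx.
  destruct Hx as [i [<- Hi]]. apply prodl_pos. intros y Hy. apply in_map_iff in Hy.
  destruct Hy as [j [<- Hj]]. pose proof (H i Hi). lia. Qed.

Lemma archi_nat r : exists N, r < INR N.
Proof. destruct (Rle_dec r 0).
  - exists 1%nat. simpl. lra.
  - destruct (archimed r) as [H _].
    assert (0 < up r)%Z by (apply lt_0_IZR; lra).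
    exists (Z.to_nat (up r)). rewrite INR_IZR_INZ, Z2Nat.id by lia. lra. Qed.

Theorem theorem9p5 : forall (n : nat), (2 <= n)%nat ->
  forall A : R, S_set (n - 1) A -> lower_acc_point n A.
Proof.
  intros n Hn A [v [Hlen [Hpos0 HML]]].
  assert (Hpos : forall vi, In vi v -> (0 < vi)%nat) by (apply Forall_forall; auto).
  assert (Hv : v <> []) by (intro; subst; simpl in Hlen; lia).
  destruct (bound_ex v) as [V [HV1 HV]].
  pose proof (ML_pos v A Hv Hpos HML) as HA0.
  assert (HAh : A <= 1/2).
  { destruct HML as [[t0 Ht0] _]. destruct (md_att v t0 Hv) as [vi [_ Hm]].
    rewrite <- Ht0, Hm. apply dist_half. }
  set (P := PP v). assert (HP : (0 < P)%nat) by (apply PP_pos; auto).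
  set (w := fun k : nat => (S k * P)%nat).
  assert (Hex : forall k, exists m, is_ML (w k :: v) m).
  { intros k. apply exists_ML. discriminate. }
  pose (s := fun k => proj1_sig (constructive_indefinite_description _ (Hex k))).
  assert (Hs : forall k, is_ML (w k :: v) (s k)).
  { intros k. exact (proj2_sig (constructive_indefinite_description _ (Hex k))). }
  assert (Hlow : forall k, A - V / INR (S k) <= s k).
  { intros k. destruct HML as [[ts Hts] HMv].
    set (W := INR (w k)).
    assert (HW : INR (S k) <= W).
    { unfold W, w. apply le_INR. nia. }
    assert (HSk : 1 <= INR (S k)) by (apply (le_INR 1); lia).
    set (f0 := rfloor (ts * W)). pose proof (rfloor_spec (ts * W)) as Hf.
    fold f0 in Hf.
    set (t := (IZR f0 + 1/2) / W).
    assert (Hdt : Rabs (t - ts) <= 1 / W).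
    { apply Rabs_le. unfold t.
      replace ((IZR f0 + 1 / 2) / W - ts) with ((IZR f0 + 1/2 - ts * W) * / W)
        by (field; lra).
      assert (0 < / W) by (apply Rinv_0_lt_compat; lra).
      unfold Rdiv. split; nra. }
    assert (HVW : V / W <= V / INR (S k)).
    { unfold Rdiv. apply Rmult_le_compat_l. lra. apply Rinv_le_contravar; lra. }
    destruct (Hs k) as [_ HMu]. pose proof (HMu t) as Hu.
    destruct (md_att (w k :: v) t ltac:(discriminate)) as [x [[<-|Hx] Hm]].
    - rewrite Hm in Hu. fold W in Hu.
      replace (t * W) with (IZR f0 + 1/2) in Hu by (unfold t; field; lra).
      rewrite dist_shift in Hu by (rewrite Rabs_right; lra).
      rewrite Rabs_right in Hu by lra.
      assert (0 <= V / INR (S k)) by (unfold Rdiv; apply Rmult_le_pos; [lra| apply Rlt_le, Rinv_0_lt_compat; lra]). lra.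
    - rewrite Hm in Hu. pose proof (md_le v ts x Hx) as H1. rewrite Hts in H1.
      pose proof (dist_lip (ts * INR x) (t * INR x)) as H2.
      replace (ts * INR x - t * INR x) with ((t - ts) * (- INR x)) in H2 by ring.
      rewrite Rabs_mult, Rabs_Ropp, (Rabs_right (INR x)) in H2
        by (apply Rle_ge, pos_INR).
      pose proof (HV x Hx). pose proof (pos_INR x). pose proof (Rabs_pos (t - ts)).
      assert (Rabs (t - ts) * INR x <= V / W).
      { apply Rle_trans with (1 / W * V). apply Rmult_le_compat; lra.
        unfold Rdiv. lra. }
      lra. }
  exists s. split; [|split].
  - intros k. exists (w k :: v). split; [simpl; lia|]. split; [|apply Hs].
    constructor; auto. unfold w. nia.
  - intros k. destruct (Hs k) as [[t0 Ht0] _]. rewrite <- Ht0.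
    pose proof HML as [_ HMv]. pose proof (HMv t0) as H0.
    destruct (Rlt_dec (min_dist v t0) A) as [Hlt|Hge].
    + destruct (md_att v t0 Hv) as [vi [Hin Hm]].
      pose proof (md_le (w k :: v) t0 vi (or_intror Hin)). lra.
    + assert (Heq : min_dist v t0 = A) by lra.
      destruct (key v A t0 Hv Hpos HML Heq) as [i [j [z [Hi [Hj Hz]]]]].
      destruct (PP_div i j v Hi Hj) as [q Hq]. fold P in Hq.
      pose proof (md_le (w k :: v) t0 (w k) (or_introl eq_refl)) as H1.
      replace (t0 * INR (w k)) with (IZR (z * Z.of_nat (S k * q))) in H1.
      * rewrite dist_int0 in H1. lra.
      * unfold w. rewrite Hq. rewrite mult_IZR, <- INR_IZR_INZ, <- Hz.
        rewrite !mult_INR, plus_INR. ring.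
  - intros eps Heps. destruct (archi_nat (V / eps)) as [N HN].
    exists N. intros k Hk. unfold R_dist.
    pose proof (Hlow k). destruct (Hs k) as [[t0 Ht0] _].
    assert (s k <= A).
    { rewrite <- Ht0. destruct HML as [[ts Hts] HMv].
      destruct (md_att v t0 Hv) as [vi [Hin Hm]].
      pose proof (md_le (w k :: v) t0 vi (or_intror Hin)). pose proof (HMv t0). lra. }
    rewrite Rabs_left1 by lra.
    assert (INR N <= INR (S k)) by (apply le_INR; lia).
    assert (V / INR (S k) < eps).
    { assert (HSk : 0 < INR (S k)) by (apply lt_0_INR; lia).
      apply (Rmult_lt_reg_r (INR (S k))). lra.
      unfold Rdiv. rewrite Rmult_assoc, Rinv_l by lra.
      assert (V < eps * INR N).
      { apply (Rmult_lt_compat_r eps) in HN; auto.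
        unfold Rdiv in HN. rewrite Rmult_assoc, Rinv_l in HN by lra. lra. }
      nra. }
    lra.
Qed.
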